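(* Let $\{x_k\}$ be the random sequence generated by the SKM method. Define $\bar{x}_k = \frac{1}{k}\sum_{l=1}^{k} x_l$. Then for any $0 < \delta < 2$, $$\mathbb{E}[f(\bar{x}_k)] \leq \frac{d(x_0,P)^2}{2\delta k(2-\delta)}.$$
   Context: Linear feasibility problem $Ax \leq b$ with $A \in \mathbb{R}^{m\times n}$, $b \in \mathbb{R}^m$, assumed consistent, with rows $a_i^T$ normalized ($\|a_i\|=1$). $P = \{x : Ax \leq b\}$, $\mathcal{P}(x)$ the Euclidean projection onto $P$, $d(x,P) = \|x-\mathcal{P}(x)\|$. Sampling: at each iteration a set $\tau$ of $\beta$ rows is chosen uniformly at random among all $\binom{m}{\beta}$ subsets and $i^* = \arg\max_{i\in\tau}(a_i^Tx-b_i)^+$; $\mathbb{E}_{\mathbb{S}}$ denotes expectation over this sampling. $f(x) = \mathbb{E}_{\mathbb{S}}\big[\tfrac12|(a_{i^*}^Tx-b_{i^*})^+|^2\big]$. SKM method (Sampling Kaczmarz Motzkin): starting from $x_0$, at each iteration sample $\tau_k$, pick $i^*$ at $x_k$, and set $x_{k+1} = x_k - \delta(a_{i^*}^Tx_k-b_{i^*})^+a_{i^*}$. *)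

(* Defs.v *)
From HB Require Import structures.
From mathcomp Require Import all_boot all_order all_algebra.
From mathcomp Require Import classical_sets reals.
Set Implicit Arguments. Unset Strict Implicit. Unset Printing Implicit Defensive.
Import Order.TTheory GRing.Theory Num.Theory.
Local Open Scope ring_scope.
Local Open Scope classical_set_scope.

Section SKM.
Variables (R : realType) (m n : nat) (A : 'M[R]_(m, n)) (b : 'cV[R]_m).

Definition pos (t : R) : R := Num.max t 0.

Definition res (x : 'cV[R]_n) (i : 'I_m) : R := \sum_(j < n) A i j * x j 0 - b i 0.

Definition norm2 (v : 'cV[R]_n) : R := \sum_(j < n) v j 0 ^+ 2.

Definition feasP : set 'cV[R]_n := [set x | forall i, res x i <= 0].

Definition distP (x : 'cV[R]_n) : R :=
  inf [set Num.sqrt (norm2 (x - y)) | y in feasP].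

Definition maxres (tau : {set 'I_m}) (x : 'cV[R]_n) : R :=
  \big[Num.max/0]_(i in tau) pos (res x i).

(* f(x) = E_S[ 1/2 |(a_{i*}^T x - b_{i*})^+|^2 ], tau uniform among beta-subsets *)
Definition fobj (beta : nat) (x : 'cV[R]_n) : R :=
  (\sum_(tau : {set 'I_m} | #|tau| == beta) (2%:R)^-1 * maxres tau x ^+ 2)
  / ('C(m, beta))%:R.

Definition argmax_rule (beta : nat) (sel : {set 'I_m} -> 'cV[R]_n -> 'I_m) : Prop :=
  forall (tau : {set 'I_m}) (x : 'cV[R]_n), #|tau| = beta ->
    sel tau x \in tau /\ (forall j, j \in tau -> pos (res x j) <= pos (res x (sel tau x))).

Fixpoint skm_iter (sel : {set 'I_m} -> 'cV[R]_n -> 'I_m) (delta : R)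
    (x0 : 'cV[R]_n) (t : nat -> {set 'I_m}) (l : nat) : 'cV[R]_n :=
  match l with
  | 0 => x0
  | l'.+1 =>
      let x := skm_iter sel delta x0 t l' in
      let i := sel (t l') x in
      x - (delta * pos (res x i)) *: (row i A)^T
  end.

Definition hist {k : nat} (s : {ffun 'I_k -> {set 'I_m}}) (l : nat) : {set 'I_m} :=
  odflt (finset.set0 : {set 'I_m}) (omap s (insub l)).

Definition xbar sel delta x0 (t : nat -> {set 'I_m}) (k : nat) : 'cV[R]_n :=
  (k%:R)^-1 *: \sum_(1 <= l < k.+1) skm_iter sel delta x0 t l.

(* E[f(bar x_k)]: expectation over i.i.d. uniform beta-subsets tau_0..tau_{k-1} *)
Definition expected_f_xbar beta sel delta x0 (k : nat) : R :=
  (\sum_(s : {ffun 'I_k -> {set 'I_m}} | [forall l, #|s l| == beta])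
      fobj beta (xbar sel delta x0 (hist s) k))
  / (('C(m, beta))%:R ^+ k).

End SKM.

(* Main.v *)
Require Import Defs.
From HB Require Import structures.
From mathcomp Require Import all_boot all_order all_algebra.
From mathcomp Require Import classical_sets reals.
From mathcomp Require Import lra ring.
Import Order.TTheory GRing.Theory Num.Theory.
Local Open Scope ring_scope.

Section Aux.
Variables (R : realType) (m n : nat) (A : 'M[R]_(m, n)) (b : 'cV[R]_m).
Variables (beta : nat) (sel : {set 'I_m} -> 'cV[R]_n -> 'I_m) (delta : R).

Definition step (tau : {set 'I_m}) (x : 'cV[R]_n) : 'cV[R]_n :=
  x - (delta * pos (res A b x (sel tau x))) *: (row (sel tau x) A)^T.

Lemma skm_S x0 t l : skm_iter A b sel delta x0 t l.+1 = step (t l) (skm_iter A b sel delta x0 t l).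
Proof. by []. Qed.

Lemma pos_ge0 (t : R) : 0 <= pos t.
Proof. by rewrite /pos le_max lexx orbT. Qed.

Lemma pos_ge (t : R) : t <= pos t.
Proof. by rewrite /pos le_max lexx. Qed.

Lemma pos_sq (t : R) : pos t * t = pos t ^+ 2.
Proof.
by rewrite /pos; case: ler0P => h; rewrite expr2 ?mul0r.
Qed.

Lemma maxres_ge0 (tau : {set 'I_m}) (x : 'cV[R]_n) : 0 <= maxres A b tau x.
Proof.
rewrite /maxres; elim/big_ind: _ => //; last by move=> i _; exact: pos_ge0.
by move=> u v hu hv; rewrite le_max hu.
Qed.

Lemma maxres_sel (tau : {set 'I_m}) (x : 'cV[R]_n) : argmax_rule A b beta sel -> #|tau| = beta ->
  maxres A b tau x = pos (res A b x (sel tau x)).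
Proof.
move=> H ht; have [Hin Hle] := H tau x ht.
apply/eqP; rewrite eq_le; apply/andP; split.
  by apply: bigmax_le; [exact: pos_ge0| move=> i /Hle].
by rewrite /maxres (bigD1 (sel tau x)) //= le_max lexx.
Qed.

Lemma norm2_ge0 (v : 'cV[R]_n) : 0 <= norm2 v.
Proof. by apply: sumr_ge0 => j _; exact: sqr_ge0. Qed.

Lemma step_ineq (tau : {set 'I_m}) (x y : 'cV[R]_n) :
  (forall i : 'I_m, \sum_(j < n) A i j ^+ 2 = 1) -> feasP A b y -> 0 < delta ->
  norm2 (step tau x - y) <= norm2 (x - y) - delta * (2 - delta) * pos (res A b x (sel tau x)) ^+ 2.
Proof.
move=> Hn Hy Hd; set i := sel tau x; set r := pos (res A b x i).
have E1 : norm2 (step tau x - y) = \sum_(j < n) ((x j 0 - y j 0) ^+ 2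
     + (- 2 * delta * r) * (A i j * (x j 0 - y j 0)) + (delta * r) ^+ 2 * (A i j ^+ 2)).
  rewrite /norm2; apply: eq_bigr => j _; rewrite /step !mxE /r /i; ring.
have E2 : \sum_(j < n) A i j * (x j 0 - y j 0) = res A b x i - res A b y i.
  rewrite /res; under eq_bigr do rewrite mulrBr.
  rewrite sumrB; ring.
rewrite E1 !big_split /= -!mulr_sumr E2 Hn.
have -> : \sum_(j < n) (x j 0 - y j 0) ^+ 2 = norm2 (x - y).
  by apply: eq_bigr => j _; rewrite !mxE.
have hy : res A b y i <= 0 by exact: Hy.
have hr : 0 <= r by exact: pos_ge0.
have hsq : r * res A b x i = r ^+ 2 by exact: pos_sq.
have hp : 0 <= delta * r * (- res A b y i).
  by apply: mulr_ge0; [apply: mulr_ge0; [exact: ltW|exact: hr]| rewrite oppr_ge0].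
have h1 : delta * r * res A b x i = delta * r ^+ 2 by rewrite -mulrA hsq.
move: hp h1; clearbody r; move: (res A b x i) (res A b y i) (norm2 (x - y)) => rx ry D hp h1.
nra.
Qed.


Definition SS k (F : (nat -> {set 'I_m}) -> R) : R :=
  \sum_(s : {ffun 'I_k -> {set 'I_m}} | [forall l, #|s l| == beta]) F (hist s).

Definition tcons (tau : {set 'I_m}) (t : nat -> {set 'I_m}) (j : nat) : {set 'I_m} :=
  if j is j'.+1 then t j' else tau.

Definition ffcons k (tau : {set 'I_m}) (s : {ffun 'I_k -> {set 'I_m}}) : {ffun 'I_k.+1 -> {set 'I_m}} :=
  [ffun i => if unlift ord0 i is Some j then s j else tau].

Arguments ffcons {k}.

Definition ffdecons k (s : {ffun 'I_k.+1 -> {set 'I_m}}) : {set 'I_m} * {ffun 'I_k -> {set 'I_m}} :=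
  (s ord0, [ffun j => s (lift ord0 j)]).

Lemma ffcons_bij k : bijective (fun p : {set 'I_m} * {ffun 'I_k -> {set 'I_m}} => ffcons p.1 p.2).
Proof.
exists (@ffdecons k).
  case=> tau s; rewrite /ffdecons /ffcons /= ffunE unlift_none; congr pair.
  by apply/ffunP => j; rewrite !ffunE liftK.
move=> s; apply/ffunP => i; rewrite /ffdecons /ffcons /= !ffunE.
by case: unliftP => [j ->|->] //; rewrite ffunE.
Qed.

Lemma ffcons_valid k tau (s : {ffun 'I_k -> {set 'I_m}}) :
  [forall l, #|ffcons tau s l| == beta] = (#|tau| == beta) && [forall l, #|s l| == beta].
Proof.
apply/idP/idP.
  move/forallP => H; apply/andP; split.
    by move: (H ord0); rewrite ffunE unlift_none.
  by apply/forallP => j; move: (H (lift ord0 j)); rewrite ffunE liftK.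
case/andP => Ht /forallP Hs; apply/forallP => i; rewrite ffunE.
by case: unliftP => [j _|_].
Qed.

Lemma hist_ffcons k tau (s : {ffun 'I_k -> {set 'I_m}}) :
  hist (ffcons tau s) = tcons tau (hist s).
Proof.
apply: boolp.funext => j; rewrite /hist /tcons.
case: j => [|j].
  case: insubP => [i _ Hi|] //=.
  by rewrite ffunE (_ : i = ord0) ?unlift_none //; apply: val_inj.
case: insubP => [i Hi Hv|Hn]; case: insubP => [i' Hi' Hv'|Hn'] //=.
- rewrite ffunE (_ : i = lift ord0 i') ?liftK //; apply: val_inj.
  by rewrite Hv -Hv' -lift0.
- by move: Hn'; rewrite -ltnS Hi.
- by move: Hn; rewrite ltnS Hi'.
Qed.

Lemma SS_cons k F :
  SS k.+1 F = \sum_(tau : {set 'I_m} | #|tau| == beta) SS k (fun t => F (tcons tau t)).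
Proof.
rewrite /SS (reindex (fun p : {set 'I_m} * {ffun 'I_k -> {set 'I_m}} => ffcons p.1 p.2)) /=;
  last by apply: onW_bij; exact: ffcons_bij.
rewrite pair_big /=; apply: eq_big => [p|p _]; first by rewrite ffcons_valid.
by rewrite hist_ffcons.
Qed.

Lemma SS0 F : SS 0 F = F (fun _ => finset.set0).
Proof.
rewrite /SS (eq_bigl (fun _ => true)); last by move=> s; apply/forallP => -[].
rewrite (eq_bigr (fun _ => F (fun _ => finset.set0))); last first.
  move=> s _; congr F; apply: boolp.funext => j; rewrite /hist.
  by case: insubP => // -[].
by rewrite sumr_const card_ffun card_ord expn0.
Qed.

Lemma SS_ext k F G : (forall t, F t = G t) -> SS k F = SS k G.
Proof. by move=> H; apply: eq_bigr => s _. Qed.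

Lemma SS_le k F G : (forall t, F t <= G t) -> SS k F <= SS k G.
Proof. by move=> H; apply: ler_sum => s _. Qed.

Lemma SS_ge0 k F : (forall t, 0 <= F t) -> 0 <= SS k F.
Proof. by move=> H; apply: sumr_ge0 => s _. Qed.

Lemma SS_sum k (r : seq nat) (F : nat -> (nat -> {set 'I_m}) -> R) :
  SS k (fun t => \sum_(l <- r) F l t) = \sum_(l <- r) SS k (F l).
Proof. by rewrite /SS exchange_big. Qed.

Definition CC : R := ('C(m, beta))%:R.

Lemma sum_tau_const (c : R) : \sum_(tau : {set 'I_m} | #|tau| == beta) c = c * CC.
Proof.
have -> : CC = #|[set tau : {set 'I_m} | #|tau| == beta]|%:R by rewrite card_draws card_ord.
rewrite mulr_natr -sumr_const.
by apply: eq_bigl => tau; rewrite inE.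
Qed.

Lemma SS_const k (c : R) : SS k (fun _ => c) = c * CC ^+ k.
Proof.
elim: k => [|k IH]; first by rewrite SS0 expr0 mulr1.
rewrite SS_cons (eq_bigr (fun _ => c * CC ^+ k)); last by move=> tau _; rewrite -IH.
by rewrite sum_tau_const exprS; ring.
Qed.


Lemma skm_tcons x0 tau t l :
  skm_iter A b sel delta x0 (tcons tau t) l.+1 = skm_iter A b sel delta (step tau x0) t l.
Proof. by elim: l => [|l IH] //; rewrite skm_S IH. Qed.

Lemma CC_gt0 : (beta <= m)%N -> 0 < CC.
Proof. by move=> h; rewrite /CC ltr0n bin_gt0. Qed.

Lemma stepsum x y :
  (beta <= m)%N ->
  (forall i : 'I_m, \sum_(j < n) A i j ^+ 2 = 1) -> feasP A b y ->
  argmax_rule A b beta sel -> 0 < delta ->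
  2 * delta * (2 - delta) * fobj A b beta x * CC <=
  CC * norm2 (x - y) - \sum_(tau : {set 'I_m} | #|tau| == beta) norm2 (step tau x - y).
Proof.
move=> Hb Hn Hy Harg Hd.
have hC := CC_gt0 Hb.
rewrite /fobj -/CC -mulrA divfK ?gt_eqF // mulr_sumr.
rewrite [CC * _]mulrC -sum_tau_const -sumrB; apply: ler_sum => tau /eqP ht.
rewrite (maxres_sel _ _ Harg ht).
have := step_ineq tau x y Hn Hy Hd.
have -> : 2 * delta * (2 - delta) * (2^-1 * pos (res A b x (sel tau x)) ^+ 2)
   = delta * (2 - delta) * pos (res A b x (sel tau x)) ^+ 2.
  by field.
lra.
Qed.

Lemma fobj_ge0 x : 0 <= fobj A b beta x.
Proof.
rewrite /fobj; apply: divr_ge0 => //; apply: sumr_ge0 => tau _.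
by apply: mulr_ge0; [rewrite invr_ge0|exact: sqr_ge0].
Qed.

Lemma Qlem k :
  (beta <= m)%N ->
  (forall i : 'I_m, \sum_(j < n) A i j ^+ 2 = 1) ->
  argmax_rule A b beta sel -> 0 < delta -> delta < 2 ->
  forall x0 y, feasP A b y ->
  2 * delta * (2 - delta) * \sum_(0 <= l < k.+1) SS k (fun t => fobj A b beta (skm_iter A b sel delta x0 t l))
  <= CC ^+ k * norm2 (x0 - y).
Proof.
move=> Hb Hn Harg Hd Hd2.
have hC := CC_gt0 Hb.
elim: k => [|k IH] x0 y Hy.
  rewrite big_nat1 SS0 /= expr0 mul1r.
  have h := stepsum x0 y Hb Hn Hy Harg Hd.
  have hs : 0 <= \sum_(tau : {set 'I_m} | #|tau| == beta) norm2 (step tau x0 - y).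
    by apply: sumr_ge0 => tau _; exact: norm2_ge0.
  rewrite -(ler_pM2r hC); lra.
rewrite big_ltn // big_add1 /=.
rewrite [SS k.+1 _](SS_const k.+1 (fobj A b beta x0)).
rewrite (eq_bigr (fun l => \sum_(tau : {set 'I_m} | #|tau| == beta)
     SS k (fun t => fobj A b beta (skm_iter A b sel delta (step tau x0) t l)))); last first.
  move=> l _; rewrite SS_cons; apply: eq_bigr => tau _; apply: SS_ext => t.
  by have := skm_tcons x0 tau t l => /= ->.
rewrite exchange_big /= mulrDr.
set S1 := \sum_(tau | _) _.
have H1 : 2 * delta * (2 - delta) * S1 <=
   CC ^+ k * \sum_(tau : {set 'I_m} | #|tau| == beta) norm2 (step tau x0 - y).
  rewrite /S1 !mulr_sumr; apply: ler_sum => tau _; exact: IH.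
have h := stepsum x0 y Hb Hn Hy Harg Hd.
have hk : 0 <= CC ^+ k by apply: exprn_ge0; exact: ltW.
have h2 := ler_wpM2l hk h.
move: H1 h2; rewrite exprS.
set S3 := \sum_(tau | _) _.
move=> H1 h2.
clearbody S1 S3.
lra.
Qed.


Lemma sq_sum (r : seq nat) (a : nat -> R) :
  (\sum_(l <- r) a l) ^+ 2 <= (size r)%:R * \sum_(l <- r) a l ^+ 2.
Proof.
elim: r => [|x r IH]; first by rewrite !big_nil expr0n /= mul0r.
rewrite !big_cons /=.
have -> : (size r).+1%:R = (size r)%:R + 1 :> R by rewrite -addn1 natrD.
have hQ : 0 <= \sum_(l <- r) a l ^+ 2 by apply: sumr_ge0 => l _; exact: sqr_ge0.
move: IH hQ; set S := \sum_(l <- r) a l; set Q := \sum_(l <- r) _.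
have hN : 0 <= (size r)%:R :> R by [].
move: hN; set N := (size r)%:R => hN IH hQ.
case: (posnP (size r)) => [h0|hpos].
  have hN0 : N = 0 by rewrite /N h0.
  rewrite hN0 mul0r in IH.
  have hS : S ^+ 2 = 0 by apply/eqP; rewrite eq_le IH sqr_ge0.
  have hS0 : S = 0 by apply/eqP; rewrite -sqrf_eq0 hS.
  rewrite hN0 hS0; lra.
have hNp : 0 < N by rewrite /N ltr0n.
have key : 0 <= N * (N * a x ^+ 2 + Q - 2 * a x * S).
  have : 0 <= (N * a x - S) ^+ 2 by exact: sqr_ge0.
  nra.
rewrite pmulr_rge0 // in key.
nra.
Qed.

Lemma pos_le_maxres (tau : {set 'I_m}) x i : i \in tau -> pos (res A b x i) <= maxres A b tau x.
Proof. by move=> hi; rewrite /maxres (bigD1 i) //= le_max lexx. Qed.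

Lemma res_avg k (X : nat -> 'cV[R]_n) i : (0 < k)%N ->
  res A b ((k%:R)^-1 *: \sum_(1 <= l < k.+1) X l) i = (k%:R)^-1 * \sum_(1 <= l < k.+1) res A b (X l) i.
Proof.
move=> hk; have hk' : (k%:R : R) != 0 by rewrite pnatr_eq0 -lt0n.
rewrite /res sumrB sumr_const_nat subSS subn0 mulrBr.
congr (_ - _); last by rewrite -[b i 0 *+ k]mulr_natr mulrCA mulVf // mulr1.
rewrite [X in _ = _ * X]exchange_big /= mulr_sumr; apply: eq_bigr => j _.
rewrite !mxE summxE !mulr_sumr; apply: eq_bigr => l _; ring.
Qed.

Lemma maxres_avg k (X : nat -> 'cV[R]_n) (tau : {set 'I_m}) : (0 < k)%N ->
  maxres A b tau ((k%:R)^-1 *: \sum_(1 <= l < k.+1) X l)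
    <= (k%:R)^-1 * \sum_(1 <= l < k.+1) maxres A b tau (X l).
Proof.
move=> hk.
have hki : 0 <= (k%:R : R)^-1 by rewrite invr_ge0.
have h0 : 0 <= (k%:R : R)^-1 * \sum_(1 <= l < k.+1) maxres A b tau (X l).
  by apply: mulr_ge0 => //; apply: sumr_ge0 => l _; exact: maxres_ge0.
rewrite /maxres; apply: bigmax_le => // i hi.
rewrite res_avg //.
apply: (@le_trans _ _ ((k%:R : R)^-1 * \sum_(1 <= l < k.+1) pos (res A b (X l) i))).
  rewrite /pos ge_max; apply/andP; split.
    by apply: ler_wpM2l => //; apply: ler_sum => l _; exact: pos_ge.
  by apply: mulr_ge0 => //; apply: sumr_ge0 => l _; exact: pos_ge0.
by apply: ler_wpM2l => //; apply: ler_sum => l _; exact: pos_le_maxres.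
Qed.

Lemma fobj_avg k (X : nat -> 'cV[R]_n) : (0 < k)%N ->
  fobj A b beta ((k%:R)^-1 *: \sum_(1 <= l < k.+1) X l)
    <= (k%:R)^-1 * \sum_(1 <= l < k.+1) fobj A b beta (X l).
Proof.
move=> hk.
have hkp : 0 < (k%:R : R) by rewrite ltr0n.
have hki : 0 <= (k%:R : R)^-1 by rewrite invr_ge0 ltW.
set c0 : R := 2^-1 / ('C(m, beta))%:R.
have hc0 : 0 <= c0 by rewrite /c0 divr_ge0 // invr_ge0.
have E x : fobj A b beta x = \sum_(tau : {set 'I_m} | #|tau| == beta) c0 * maxres A b tau x ^+ 2.
  by rewrite /fobj mulr_suml; apply: eq_bigr => tau _; rewrite /c0; ring.
rewrite E (eq_bigr (fun l => \sum_(tau : {set 'I_m} | #|tau| == beta) c0 * maxres A b tau (X l) ^+ 2));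
  last by move=> l _; rewrite E.
rewrite exchange_big /= mulr_sumr; apply: ler_sum => tau _.
rewrite -mulr_sumr [X in _ <= X]mulrCA; apply: ler_wpM2l => //.
set M := fun l => maxres A b tau (X l).
have hM := maxres_avg k X tau hk.
have hv := maxres_ge0 tau ((k%:R)^-1 *: \sum_(1 <= l < k.+1) X l).
have hsq := sq_sum (index_iota 1 k.+1) M.
have hs : size (index_iota 1 k.+1) = k by rewrite /index_iota size_iota subSS subn0.
rewrite hs in hsq.
apply: (@le_trans _ _ (((k%:R)^-1 * \sum_(1 <= l < k.+1) M l) ^+ 2)).
  by rewrite !expr2; apply: ler_pM.
rewrite (_ : ((k%:R)^-1 * \sum_(1 <= l < k.+1) M l) ^+ 2 =
   (k%:R)^-1 * ((k%:R)^-1 * (\sum_(1 <= l < k.+1) M l) ^+ 2)); last first.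
  by rewrite expr2; ring.
apply: ler_wpM2l => //.
apply: (le_trans (ler_wpM2l hki hsq)); rewrite mulKf ?gt_eqF //.
Qed.


Lemma main_aux (x0 : 'cV[R]_n) (k : nat) :
  (0 < beta <= m)%N ->
  (forall i : 'I_m, \sum_(j < n) A i j ^+ 2 = 1) ->
  (exists x, feasP A b x) ->
  argmax_rule A b beta sel ->
  0 < delta < 2 ->
  (0 < k)%N ->
  expected_f_xbar A b beta sel delta x0 k
    <= distP A b x0 ^+ 2 / (2%:R * delta * k%:R * (2%:R - delta)).
Proof.
move=> /andP[Hb0 Hb] Hn [y0 Hy0] Harg /andP[Hd Hd2] hk.
have hC := CC_gt0 Hb.
have hCk : 0 < CC ^+ k by apply: exprn_gt0.
have hkp : 0 < (k%:R : R) by rewrite ltr0n.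
set K := 2%:R * delta * k%:R * (2%:R - delta).
have hK : 0 < K by rewrite /K; apply: mulr_gt0; [apply: mulr_gt0; [apply: mulr_gt0|]|]; lra.
have hc : 0 < 2 * delta * (2 - delta) by apply: mulr_gt0; [apply: mulr_gt0|]; lra.
set Ex := expected_f_xbar A b beta sel delta x0 k.
have ExE : Ex = SS k (fun t => fobj A b beta (xbar A b sel delta x0 t k)) / CC ^+ k by [].
have Ex0 : 0 <= Ex.
  by rewrite ExE; apply: divr_ge0; [apply: SS_ge0 => t; exact: fobj_ge0| exact: ltW].
have Hyb : forall y, feasP A b y -> Ex <= norm2 (x0 - y) / K.
  move=> y Hy.
  set T := \sum_(0 <= l < k.+1) SS k (fun t => fobj A b beta (skm_iter A b sel delta x0 t l)).
  have hT : 2 * delta * (2 - delta) * T <= CC ^+ k * norm2 (x0 - y).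
    exact: Qlem.
  have h1 : SS k (fun t => fobj A b beta (xbar A b sel delta x0 t k)) <= (k%:R)^-1 * T.
    apply: (@le_trans _ _ (SS k (fun t => (k%:R)^-1 *
        \sum_(1 <= l < k.+1) fobj A b beta (skm_iter A b sel delta x0 t l)))).
      by apply: SS_le => t; rewrite /xbar; exact: fobj_avg.
    rewrite /SS -mulr_sumr; apply: ler_wpM2l; first by rewrite invr_ge0 ltW.
    have := SS_sum k (index_iota 1 k.+1) (fun l t => fobj A b beta (skm_iter A b sel delta x0 t l)).
    rewrite /SS => ->; rewrite /T [X in _ <= X](big_ltn (ltn0Sn k)) lerDr.
    by apply: SS_ge0 => t; exact: fobj_ge0.
  have hT' : T <= CC ^+ k * norm2 (x0 - y) / (2 * delta * (2 - delta)).
    by rewrite ler_pdivlMr // mulrC.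
  rewrite ExE ler_pdivrMr // .
  have -> : norm2 (x0 - y) / K * CC ^+ k = (k%:R)^-1 * (CC ^+ k * norm2 (x0 - y) / (2 * delta * (2 - delta))).
    rewrite /K; field; apply/and3P; split; rewrite ?gt_eqF //; lra.
  apply: (le_trans h1); apply: ler_wpM2l => //; by rewrite invr_ge0 ltW.
have hinf : Num.sqrt (Ex * K) <= distP A b x0.
  rewrite /distP; apply: lb_le_inf.
    by exists (Num.sqrt (norm2 (x0 - y0))); exists y0.
  move=> z [y Hy <-]; rewrite ler_sqrt; last exact: norm2_ge0.
  by rewrite -ler_pdivlMr //; exact: Hyb.
have hEK : 0 <= Ex * K by apply: mulr_ge0 => //; exact: ltW.
rewrite ler_pdivlMr // -(sqr_sqrtr hEK) !expr2.
by apply: ler_pM => //; exact: sqrtr_ge0.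
Qed.

End Aux.

Theorem corollary2 (R : realType) (m n : nat) (A : 'M[R]_(m, n)) (b : 'cV[R]_m)
  (beta : nat) (sel : {set 'I_m} -> 'cV[R]_n -> 'I_m) (delta : R)
  (x0 : 'cV[R]_n) (k : nat) :
  (0 < beta <= m)%N ->
  (forall i : 'I_m, \sum_(j < n) A i j ^+ 2 = 1) ->
  (exists x, feasP A b x) ->
  argmax_rule A b beta sel ->
  0 < delta < 2 ->
  (0 < k)%N ->
  expected_f_xbar A b beta sel delta x0 k
    <= distP A b x0 ^+ 2 / (2%:R * delta * k%:R * (2%:R - delta)).
Proof. exact: main_aux. Qed.
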